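(* Let $\mathbb{F}$ be a field of characteristic $0$ and $h=\mathsf{u}_1^{\alpha_1}\cdots\mathsf{u}_t^{\alpha_t}\in\mathbb{F}[x]$ with $\mathsf{u}_i$ distinct monic irreducible polynomials, $\alpha_1,\dots,\alpha_k\geq2$, $\alpha_{k+1}=\dots=\alpha_t=1$, and $k\geq1$. Let $\Theta_1=\mathsf{u}_1\cdots\mathsf{u}_k$. Then there is $\nu\in\mathbb{F}[x]$, unique modulo $\Theta_1\mathbb{F}[x]$, with $\nu\delta_0(1)\equiv1\pmod{\Theta_1\mathbb{F}[x]}$, and any such $\nu$ satisfies: (a) $\nu\pi_h'-1\equiv\nu\frac{\pi_hh'}{h}\pmod{\Theta_1\mathbb{F}[x]}$; (b) $\nu\pi_h'\equiv\frac{1}{1-\alpha_j}\pmod{\mathsf{u}_j\mathbb{F}[x]}$ for all $1\leq j\leq k$.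
   Context: $\pi_h=\mathsf{u}_1\cdots\mathsf{u}_t$, so $\pi_hh'/h\in\mathbb{F}[x]$, and $\delta_0(1)=\pi_h'-\pi_hh'/h$. *)

(* Defs.v *)
From mathcomp Require Import all_boot all_order all_algebra.
Set Implicit Arguments. Unset Strict Implicit. Unset Printing Implicit Defensive.
Import GRing.Theory.
Local Open Scope ring_scope.

(* Polynomials indexed by 0 .. t-1 (the paper's u_1 .. u_t). *)
Definition hpoly (F : fieldType) (t : nat) (u : nat -> {poly F}) (alpha : nat -> nat)
  : {poly F} := \prod_(i < t) u i ^+ alpha i.

Definition pi_h (F : fieldType) (t : nat) (u : nat -> {poly F}) : {poly F} :=
  \prod_(i < t) u i.

Definition Theta1 (F : fieldType) (k : nat) (u : nat -> {poly F}) : {poly F} :=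
  \prod_(i < k) u i.

(* pi_h h' / h : an exact polynomial quotient (h divides pi_h h'). *)
Definition pihh'_h (F : fieldType) (t : nat) (u : nat -> {poly F}) (alpha : nat -> nat)
  : {poly F} :=
  (pi_h t u * (hpoly t u alpha)^`()) %/ hpoly t u alpha.

Definition delta0_1 (F : fieldType) (t : nat) (u : nat -> {poly F}) (alpha : nat -> nat)
  : {poly F} := (pi_h t u)^`() - pihh'_h t u alpha.

Definition pcong (F : fieldType) (a b m : {poly F}) : Prop := m %| (a - b).

(* Main.v *)
Require Import Defs.
From mathcomp Require Import all_boot all_order all_algebra.
From mathcomp Require Import ring.
Set Implicit Arguments. Unset Strict Implicit.
Import GRing.Theory.
Local Open Scope ring_scope.
Lemma deriv_neq0 (F : fieldType) (p : {poly F}) :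
  [pchar F] =i pred0 -> (1 < size p)%N -> p^`() != 0.
Proof.
move=> /pcharf0P ch sp.
apply/eqP => /(congr1 (fun q : {poly F} => q`_(size p).-2)).
rewrite coef_deriv coef0 -mulr_natr => /eqP; rewrite mulf_eq0 ch.
have -> : ((size p).-2.+1 = (size p).-1)%N by case: (size p) sp => [|[|n]].
rewrite -lead_coefE lead_coef_eq0 -size_poly_eq0.
by case: (size p) sp => [|[|n]].
Qed.

Lemma irr_coprime_deriv (F : fieldType) (p : {poly F}) :
  [pchar F] =i pred0 -> irreducible_poly p -> coprimep p p^`().
Proof.
move=> ch irr; have sp := irr.1.
rewrite coprimep_def; apply/negPn/negP => sg.
have /irr eq := dvdp_gcdl p p^`().
have := dvdp_gcdr p p^`(); rewrite (eqp_dvdl _ (eq sg)) => dv.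
have := dvdp_leq (deriv_neq0 ch sp) dv.
by rewrite leqNgt lt_size_deriv // -size_poly_eq0; case: (size p) sp.
Qed.

Lemma irr_coprime (F : fieldType) (p q : {poly F}) :
  p \is monic -> q \is monic -> irreducible_poly p -> irreducible_poly q ->
  p != q -> coprimep p q.
Proof.
move=> mp mq ip iq npq.
rewrite coprimep_def; apply/negPn/negP => sg.
have e1 := ip _ sg (dvdp_gcdl p q).
have e2 := iq _ sg (dvdp_gcdr p q).
have : p %= q by rewrite -(eqp_ltrans e1) e2.
by rewrite eqp_monic // (negbTE npq).
Qed.
Lemma alg1 (F : fieldType) (p Q G : {poly F}) (a : nat) : (1 <= a)%N ->
  p ^+ a %| (p * Q) * (p ^+ a * G)^`().
Proof.
case: a => // b _; rewrite derivM deriv_exp /= -mulr_natr.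
apply/dvdpP; exists (Q * (p^`() * b.+1%:R * G + p * G^`())).
rewrite !exprS; ring.
Qed.

Lemma alg2 (F : fieldType) (p Q G X : {poly F}) (a : nat) : (1 <= a)%N ->
  p != 0 -> coprimep p G -> X * (p ^+ a * G) = (p * Q) * (p ^+ a * G)^`() ->
  p %| a%:R * (p * Q)^`() - X.
Proof.
case: a => // b _ p0 cop e.
rewrite -(Gauss_dvdpl _ cop).
apply/dvdpP; exists (b.+1%:R * Q^`() * G - Q * G^`()).
have pb0 : p ^+ b.+1 != 0 by rewrite expf_neq0.
apply: (mulfI pb0).
have -> : p ^+ b.+1 * ((b.+1%:R * (p * Q)^`() - X) * G) =
   b.+1%:R * (p * Q)^`() * (p ^+ b.+1 * G) - X * (p ^+ b.+1 * G) by ring.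
rewrite e !derivM deriv_exp /= -mulr_natr !exprS; ring.
Qed.
Section S.
Variables (F : fieldType) (t : nat) (u : nat -> {poly F}) (alpha : nat -> nat).
Hypothesis ch : [pchar F] =i pred0.
Hypothesis mon : forall i, (i < t)%N -> u i \is monic.
Hypothesis irr : forall i, (i < t)%N -> irreducible_poly (u i).
Hypothesis inj : forall i j, (i < t)%N -> (j < t)%N -> u i = u j -> i = j.
Hypothesis apos : forall i, (i < t)%N -> (1 <= alpha i)%N.

Lemma cop_ij i j : (i < t)%N -> (j < t)%N -> i != j -> coprimep (u i) (u j).
Proof.
move=> hi hj nij; apply: irr_coprime; rewrite ?mon //; try exact: irr.
by apply/eqP => /(inj hi hj) /eqP; rewrite (negbTE nij).
Qed.

Lemma cop_Q (j : 'I_t) : coprimep (u j) (\prod_(i < t | i != j) u i).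
Proof.
apply: (big_ind (coprimep (u j))) => //; first exact: coprimep1.
  by move=> x y hx hy; rewrite coprimepMr hx hy.
by move=> i nij; apply: cop_ij; rewrite // eq_sym.

Qed.

Lemma cop_G (j : 'I_t) : coprimep (u j) (\prod_(i < t | i != j) u i ^+ alpha i).
Proof.
apply: (big_ind (coprimep (u j))) => //; first exact: coprimep1.
  by move=> x y hx hy; rewrite coprimepMr hx hy.
by move=> i nij; apply/coprimep_expr/cop_ij; rewrite // eq_sym.
Qed.

Lemma pi_split (j : 'I_t) : pi_h t u = u j * \prod_(i < t | i != j) u i.
Proof. by rewrite /pi_h (bigD1 j). Qed.

Lemma h_split (j : 'I_t) : hpoly t u alpha = u j ^+ alpha j * \prod_(i < t | i != j) u i ^+ alpha i.
Proof. by rewrite /hpoly (bigD1 j). Qed.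

Lemma h_dvd : hpoly t u alpha %| pi_h t u * (hpoly t u alpha)^`().
Proof.
set P := _ * _.
have hj : forall j : 'I_t, u j ^+ alpha j %| P.
  by move=> j; rewrite /P (pi_split j) (h_split j); apply: alg1; apply: apos.
rewrite /hpoly.
suff : forall n, (n <= t)%N -> \prod_(i < n) u i ^+ alpha i %| P.
  by move=> /(_ t (leqnn t)).
elim=> [|n IH] hn; first by rewrite big_ord0 dvd1p.
rewrite big_ord_recr /= Gauss_dvdp ?IH ?(ltnW hn) //=.
  exact: (hj (Ordinal hn)).
rewrite coprimep_sym; match goal with |- is_true (coprimep ?c _) => apply: (big_ind (coprimep c)) end; first exact: coprimep1.
  by move=> x y hx hy; rewrite coprimepMr hx hy.
move=> i _; apply/coprimep_expl/coprimep_expr/cop_ij.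
- exact: hn.
- exact: ltn_trans (ltn_ord i) hn.
- by rewrite neq_ltn ltn_ord orbT.
Qed.

Lemma X_eq : pihh'_h t u alpha * hpoly t u alpha = pi_h t u * (hpoly t u alpha)^`().
Proof. by rewrite /pihh'_h divpK // h_dvd. Qed.

Lemma delta_cong (j : 'I_t) :
  u j %| delta0_1 t u alpha - (1 - (alpha j)%:R) * (pi_h t u)^`().
Proof.
have -> : delta0_1 t u alpha - (1 - (alpha j)%:R) * (pi_h t u)^`() =
   (alpha j)%:R * (pi_h t u)^`() - pihh'_h t u alpha by rewrite /delta0_1; ring.
have := X_eq; rewrite (pi_split j) (h_split j) => e.
apply: alg2 e; first exact: apos.
  by rewrite monic_neq0 // mon.
exact: cop_G.
Qed.

End S.
Unset Implicit Arguments.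
Theorem lemma6p5 (F : fieldType) (t k : nat) (u : nat -> {poly F}) (alpha : nat -> nat) :
  [pchar F] =i pred0 ->
  (forall i, (i < t)%N -> u i \is monic) ->
  (forall i, (i < t)%N -> irreducible_poly (u i)) ->
  (forall i j, (i < t)%N -> (j < t)%N -> u i = u j -> i = j) ->
  (1 <= k)%N -> (k <= t)%N ->
  (forall i, (i < k)%N -> (2 <= alpha i)%N) ->
  (forall i, (k <= i < t)%N -> alpha i = 1%N) ->
  let Th := Theta1 k u in
  let d := delta0_1 t u alpha in
  (exists nu : {poly F}, pcong (nu * d) 1 Th) /\
  (forall nu1 nu2 : {poly F}, pcong (nu1 * d) 1 Th -> pcong (nu2 * d) 1 Th ->
      pcong nu1 nu2 Th) /\
  (forall nu : {poly F}, pcong (nu * d) 1 Th ->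
      pcong (nu * (pi_h t u)^`() - 1) (nu * pihh'_h t u alpha) Th /\
      (forall j, (j < k)%N ->
         pcong (nu * (pi_h t u)^`()) ((1 - (alpha j)%:R)^-1)%:P (u j))).
Proof.
move=> ch mon irr inj k1 kt a2 a1 Th d.
have apos : forall i, (i < t)%N -> (1 <= alpha i)%N.
  move=> i it; case: (ltnP i k) => ik; first exact: leq_trans (a2 i ik).
  by rewrite a1 // ik it.
have cj0 : forall j, (j < k)%N -> (1 - (alpha j)%:R : F) != 0.
  move=> j jk; have := a2 j jk; case: (alpha j) => [|b] // hb.
  rewrite mulrSr opprD addrCA subrr addr0 oppr_eq0.
  by move/pcharf0P: ch => ->; case: b hb.
have dcong : forall j, (j < k)%N ->
    u j %| d - (1 - (alpha j)%:R)%:P * (pi_h t u)^`().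
  move=> j jk; have := delta_cong mon irr inj apos (Ordinal (leq_trans jk kt)).
  by rewrite /= polyCB polyC1 polyC_natr.
have cop_dj : forall j, (j < k)%N -> coprimep (u j) d.
  move=> j jk; have jt := leq_trans jk kt.
  case/dvdpP: (dcong j jk) => m em.
  have -> : d = m * u j + (1 - (alpha j)%:R)%:P * (pi_h t u)^`()
    by rewrite -em; ring.
  rewrite coprimep_addl_mul mul_polyC coprimepZr ?cj0 //.
  rewrite (pi_split u (Ordinal jt)) derivM /= addrC mulrC coprimep_addl_mul.
  rewrite coprimepMr (irr_coprime_deriv ch (irr j jt)) /=.
  exact: (cop_Q mon irr inj (Ordinal jt)).
have copTd : coprimep Th d.
  rewrite coprimep_sym /Th /Theta1; apply: (big_ind (coprimep d)).
  - exact: coprimep1.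
  - by move=> x y hx hy; rewrite coprimepMr hx hy.
  by move=> i _; rewrite coprimep_sym cop_dj.
split.
  case/Bezout_eq1_coprimepP: copTd => [[a b] /= e].
  exists b; rewrite /pcong; apply/dvdpP; exists (- a).
  by rewrite -e; ring.
split.
  move=> nu1 nu2 h1 h2; rewrite /pcong -(Gauss_dvdpl _ copTd).
  have -> : (nu1 - nu2) * d = (nu1 * d - 1) - (nu2 * d - 1) by ring.
  exact: dvdp_sub.
move=> nu hnu; split.
  rewrite /pcong.
  have -> : nu * (pi_h t u)^`() - 1 - nu * pihh'_h t u alpha = nu * d - 1
    by rewrite /d /delta0_1; ring.
  exact: hnu.
move=> j jk; rewrite /pcong -(dvdpZr _ _ (cj0 j jk)) -mul_polyC.
have hT : u j %| Th.
  by rewrite /Th /Theta1 (bigD1 (Ordinal jk)) //= dvdp_mulIl.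
set c := (1 - (alpha j)%:R : F).
have -> : c%:P * (nu * (pi_h t u)^`() - (c^-1)%:P) =
   (nu * d - 1) - nu * (d - c%:P * (pi_h t u)^`()).
  rewrite mulrBr -polyCM mulfV ?cj0 //; ring.
apply: dvdp_sub; first exact: dvdp_trans hT hnu.
exact/dvdp_mull/dcong.
Qed.
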